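(* Let $n\ge4$ and let $x$ be a point in the image $\Phi(K_{n-1})$. Then there exist a unique chain $D_0\subsetneq D_1\subsetneq\dots\subsetneq D_m$ of sets of pairwise noncrossing diagonals of $P_n$ and unique coefficients $a_0,\dots,a_m$ with all $a_i>0$ and $\sum_i a_i=1$ such that $x=\sum_{i=0}^m a_i\Phi(D_i)$.
   Context: $P_n$ is a regular $n$-gon whose edges are labeled cyclically by a fixed circular ordering; two diagonals cross if they meet in the interior; $\mathcal D$ is the set of diagonals. The associahedron $K_{n-1}$ is the $(n-3)$-dimensional convex polytope whose faces correspond bijectively to sets $D$ of pairwise noncrossing diagonals (face of $D$ contains face of $D'$ iff $D\subseteq D'$; vertices = triangulations, with $n-3$ diagonals). For a triangulation $T$, $\Phi(T)\in\mathbb R^{\mathcal D}$ has $d$-coordinate $1/(n-3)$ if $d\in T$ and $0$ otherwise; for a set $D$ of pairwise noncrossing diagonals, $\Phi(D)$ is the average of $\Phi(T)$ over triangulations $T\supseteq D$, and is the image of the barycenter $v_D$ of the face of $D$. $\Phi$ is extended to $K_{n-1}$ affinely on each simplex of its barycentric subdivision: for a chain $D_0\subsetneq\dots\subsetneq D_m$, $\Phi(\sum a_i v_{D_i})=\sum a_i\Phi(D_i)$ for $a_i\ge0$, $\sum a_i=1$. *)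

(* Defs.v *)
From HB Require Import structures.
From mathcomp Require Import all_boot all_order all_algebra.
Set Implicit Arguments. Unset Strict Implicit. Unset Printing Implicit Defensive.
Import Order.TTheory GRing.Theory Num.Theory.
Local Open Scope ring_scope.

(* Vertices of P_n are 'I_n in cyclic order. A diagonal is a pair (i, j)
   with i < j that are not adjacent in the cyclic order. *)
Definition is_diag (n : nat) (p : 'I_n * 'I_n) : bool :=
  [&& (p.1 < p.2)%N, (p.1.+1 != p.2) & ~~ ((p.1 == 0%N :> nat) && (p.2 == n.-1 :> nat))].

Definition diag (n : nat) := {p : 'I_n * 'I_n | is_diag p}.

Definition crossing (n : nat) (d e : diag n) : bool :=
  let i := (val d).1 in let j := (val d).2 in
  let k := (val e).1 in let l := (val e).2 in
  [&& (i < k)%N, (k < j)%N & (j < l)%N] || [&& (k < i)%N, (i < l)%N & (l < j)%N].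

Definition noncrossing (n : nat) (D : {set diag n}) : bool :=
  [forall d in D, forall e in D, ~~ crossing d e].

Definition triangulation (n : nat) (T : {set diag n}) : bool :=
  noncrossing T && [forall d, (d \in T) || [exists e in T, crossing d e]].

Definition PhiT (R : realFieldType) (n : nat) (T : {set diag n}) : {ffun diag n -> R} :=
  [ffun d => if d \in T then ((n - 3)%:R)^-1 else 0].

Definition triangs_above (n : nat) (D : {set diag n}) : {set {set diag n}} :=
  [set T : {set diag n} | triangulation T & D \subset T].

Definition PhiD (R : realFieldType) (n : nat) (D : {set diag n}) : {ffun diag n -> R} :=
  [ffun d => (#|triangs_above D|%:R)^-1 * \sum_(T in triangs_above D) PhiT R T d].

Definition is_chain (n : nat) (s : seq {set diag n}) : bool :=
  all (@noncrossing n) s && sorted (fun A B : {set diag n} => A \proper B) s.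

Definition comb (R : realFieldType) (n : nat) (s : seq {set diag n}) (a : seq R)
  : {ffun diag n -> R} :=
  [ffun d => \sum_(i < size s) a`_i * PhiD R (nth set0 s i) d].

(* Phi(K_{n-1}): union over chains of the images of the simplices of the
   barycentric subdivision, i.e. convex combinations with a_i >= 0. *)
Definition in_image (R : realFieldType) (n : nat) (x : {ffun diag n -> R}) : Prop :=
  exists (s : seq {set diag n}) (a : seq R),
    [/\ is_chain s, size a = size s, all (fun t => 0 <= t) a,
        \sum_(t <- a) t = 1 & x = comb s a].

(* Main.v *)
Require Import Defs.
From HB Require Import structures.
From mathcomp Require Import all_boot all_order all_algebra.
From mathcomp Require Import zify ring.
Import Order.TTheory GRing.Theory Num.Theory.
Set Implicit Arguments. Unset Strict Implicit. Unset Printing Implicit Defensive.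

Definition crx (a b c d : nat) : Prop := (a < c /\ c < b /\ b < d)%N \/ (c < a /\ a < d /\ d < b)%N.
Definition rkf (j n v : nat) := if (j < v)%N then (v - j)%N else (v + n - j)%N.
Definition concl (i j k l p q : nat) : Prop :=
  (p = i /\ ((k < q /\ q < j) \/ q = j \/ (j < q /\ (l < i \/ q < l))) \/ (q = i /\ p < l /\ l < i))%N.

Lemma geom (i j k l p q : nat) : (i < j -> i < k -> k < j -> (j < l \/ l < i) ->
  p < q -> ~ crx i k p q -> ~ crx (minn i l) (maxn i l) p q ->
  crx (if k < l then k else l) (if k < l then l else k) p q -> concl i j k l p q)%N.
Proof.
move=> h1 h2 h3 [h4|h4] h5 h6 h7.
  have e1 : minn i l = i by apply/minn_idPl; lia.
  have e2 : maxn i l = l by apply/maxn_idPr; lia.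
  have e3 : (k < l)%N by lia.
  rewrite e1 e2 in h7; rewrite e3; clear e1 e2 e3 => h8.
  rewrite /concl; move: h6 h7 h8; rewrite /crx.
  intros. destruct h8 as [[? [? ?]]|[? [? ?]]]; lia.
have e1 : minn i l = l by apply/minn_idPr; lia.
have e2 : maxn i l = i by apply/maxn_idPl; lia.
have e3 : (k < l)%N = false by lia.
rewrite e1 e2 in h7; rewrite e3; clear e1 e2 e3 => h8.
rewrite /concl; move: h6 h7 h8; rewrite /crx.
intros. destruct h8 as [[? [? ?]]|[? [? ?]]]; lia.
Qed.

Lemma rk3 (i j n l q : nat) : (j < n -> i < j -> j < q -> q < n -> (j < l \/ l < i) -> (l < i \/ q < l) -> rkf j n l <= rkf j n q -> False)%N.
Proof. rewrite /rkf => h0 h1 h2 h3 h4 h5; case: ifP => ?; case: ifP => ?; lia. Qed.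

Lemma rk4 (i j n l p : nat) : (j < n -> i < j -> p < l -> l < i -> rkf j n l <= rkf j n p -> False)%N.
Proof. rewrite /rkf => h0 h1 h2 h3; case: ifP => ?; case: ifP => ?; lia. Qed.

Section Comb.
Variable n : nat.

Lemma crossingE (d e : diag n) : crossing d e <-> crx (val d).1 (val d).2 (val e).1 (val e).2.
Proof.
rewrite /crossing /crx; split.
  by case/orP => /and3P[h1 h2 h3]; [left|right].
by case=> [[h1 [h2 h3]]|[h1 [h2 h3]]]; apply/orP; [left|right]; apply/and3P.
Qed.

Lemma crossing_sym (d e : diag n) : crossing d e = crossing e d.
Proof. by rewrite /crossing orbC. Qed.

Lemma crossing_irr (d : diag n) : ~~ crossing d d.
Proof. by apply/negP => /crossingE; rewrite /crx; lia. Qed.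

Lemma noncrossing_add (D : {set diag n}) d : noncrossing D ->
  (forall e, e \in D -> ~~ crossing d e) -> noncrossing (d |: D).
Proof.
move=> /forallP nc cd; apply/forallP => x; apply/implyP; rewrite in_setU1 => hx.
apply/forallP => y; apply/implyP; rewrite in_setU1 => hy.
case/orP: hx => [/eqP->|hx]; case/orP: hy => [/eqP->|hy].
- exact: crossing_irr.
- exact: cd.
- by rewrite crossing_sym; apply: cd.
- by move: (nc x); rewrite hx /= => /forallP/(_ y); rewrite hy.
Qed.

Lemma nc_notin (T : {set diag n}) d e : noncrossing T -> e \in T -> crossing d e -> d \notin T.
Proof.
move=> /forallP nc eT cr; apply/negP => dT.
by move: (nc d); rewrite dT /= => /forallP/(_ e); rewrite eT cr.
Qed.

Lemma extend_gen m (D : {set diag n}) : (#|[set: diag n]| - #|D| <= m)%N -> noncrossing D ->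
  exists T, triangulation T && (D \subset T).
Proof.
elim: m D => [|m IH] D hm ncD.
  case ht: (triangulation D); first by exists D; rewrite ht subxx.
  move: ht; rewrite /triangulation ncD /= => /negbT/forallPn [d].
  rewrite negb_or => /andP[dD _].
  have := max_card (mem (d |: D)); rewrite cardsU1 dD -cardsT; lia.
case ht: (triangulation D); first by exists D; rewrite ht subxx.
move: ht; rewrite /triangulation ncD /= => /negbT/forallPn [d].
rewrite negb_or => /andP[dD /existsPn nd].
have ncD' : noncrossing (d |: D).
  by apply: noncrossing_add => // e eD; move: (nd e); rewrite eD.
have [|T /andP[hT sT]] := IH (d |: D) _ ncD'.
  by rewrite cardsU1 dD; have := max_card (mem (d |: D)); rewrite cardsU1 dD -cardsT; lia.
by exists T; apply/andP; split => //; apply: subset_trans sT; exact: subsetUr.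
Qed.

Lemma extend (D : {set diag n}) : noncrossing D -> exists T, triangulation T && (D \subset T).
Proof. exact: (extend_gen (leq_subr _ _)). Qed.


Definition memD (D : {set diag n}) (a b : nat) : bool :=
  [exists e in D, ((val e).1 == a :> nat) && ((val e).2 == b :> nat)].

Lemma memD_nc (D : {set diag n}) a b (e : diag n) : noncrossing D -> memD D a b -> e \in D ->
  ~ crx a b (val e).1 (val e).2.
Proof.
move=> /forallP nc /existsP[e' /andP[e'D /andP[/eqP h1 /eqP h2]]] eD.
move: (nc e'); rewrite e'D /= => /forallP/(_ e); rewrite eD /= => /negP h.
by move=> hc; apply: h; apply/crossingE; rewrite h1 h2.
Qed.

Lemma core (D : {set diag n}) d : noncrossing D -> d \notin D ->
  (forall e, e \in D -> ~~ crossing d e) ->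
  exists d', crossing d d' && [forall e in D, ~~ crossing d' e].
Proof.
move=> ncD dD cD.
case: d dD cD => [[i j] Hd] dD cD.
have [hij hij1 hij2] := and3P Hd; simpl in hij, hij1, hij2.
have hjn := ltn_ord j.
have Hi1 : (i.+1 < n)%N by lia.
pose Pk := fun v : 'I_n => (v == i.+1 :> nat) || [&& (i < v)%N, (v < j)%N & memD D i v].
have Pv0 : Pk (Ordinal Hi1) by rewrite /Pk eqxx.
case: (@arg_maxnP _ (Ordinal Hi1) Pk (fun v => nat_of_ord v) Pv0) => k Pkk kmax.
pose pi := if (i == 0 :> nat) then n.-1 else i.-1.
have Hpi : (pi < n)%N by rewrite /pi; case: ifP; lia.
pose Pl := fun v : 'I_n => (v == pi :> nat) || ((j < v)%N && memD D i v) || ((v < i)%N && memD D v i).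
pose rk := fun v : nat => rkf j n v.
have Pv1 : Pl (Ordinal Hpi) by rewrite /Pl eqxx.
case: (@arg_minnP _ (Ordinal Hpi) Pl (fun v => rk (nat_of_ord v)) Pv1) => l Pll lmin.
have hk : (i < k < j)%N.
  by case/orP: Pkk => [/eqP->|/and3P[h1 h2 _]]; lia.
have hl : (j < l)%N \/ (l < i)%N.
  case/orP: Pll => [/orP[|]|]; last by case/andP; right.
    by rewrite /pi; case: ifP => h /eqP ->; [left|right]; move: hij2; rewrite h /=; lia.
  by case/andP; left.
have nck : forall e : diag n, e \in D -> ~ crx i k (val e).1 (val e).2.
  move=> e eD; case/orP: Pkk => [/eqP ->|/and3P[_ _ hm]]; first by rewrite /crx; lia.
  exact: memD_nc hm eD.
have ncl : forall e : diag n, e \in D -> ~ crx (minn i l) (maxn i l) (val e).1 (val e).2.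
  move=> e eD; case/orP: Pll => [/orP[/eqP hl'|/andP[h hm]]|/andP[h hm]].
  - have := ltn_ord (val e).2; have := ltn_ord (val e).1.
    move: hl'; rewrite /pi /crx; case: ifP => hi0; lia.
  - have -> : minn i l = i by lia.
    have -> : maxn i l = l by lia.
    exact: memD_nc hm eD.
  - have -> : minn i l = l by lia.
    have -> : maxn i l = i by lia.
    exact: memD_nc hm eD.
pose dp := if (k < l)%N then (k, l) else (l, k).
have Hdp : is_diag dp.
  rewrite /dp /is_diag; case: ifP => /= h; apply/and3P; split; try lia.
exists (exist _ dp Hdp); apply/andP; split.
  apply/crossingE; rewrite /= /dp /crx; case: ifP => /= h; lia.
apply/forallP => e; apply/implyP => eD; apply/negP => /crossingE cr.
have nki := nck e eD; have nli := ncl e eD.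
have := valP e; rewrite /is_diag => /and3P[hpq _ _].
move: cr nki nli; rewrite /=.
case: e eD hpq => [[p q] He] /= eD hpq cr nki nli.
have cr' : crx (if (k < l)%N then (k:nat) else (l:nat)) (if (k < l)%N then (l:nat) else (k:nat)) p q.
  by move: cr; rewrite /dp; case: ifP.
have memiq : (p = i :> nat) -> memD D i q.
  move=> hp; apply/existsP; exists (exist _ (p, q) He); by rewrite eD /= hp !eqxx.
have mempi : (q = i :> nat) -> memD D p i.
  move=> hq; apply/existsP; exists (exist _ (p, q) He); by rewrite eD /= hq !eqxx.
have [hik hkj] := andP hk.
have final : concl i j k l p q -> False.
  rewrite /concl => [[[hp [[h1 h2]|[hq|[h1 h2]]]]|[hq [h1 h2]]]].
  - have : Pk q.
      by rewrite /Pk (memiq hp) h2 (ltn_trans hik h1) orbT.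
    by move/kmax; rewrite /= leqNgt h1.
  - apply: (negP dD); suff <- : exist (fun p0 => is_diag p0) (p, q) He = exist _ (i, j) Hd by [].
    by apply: val_inj => /=; rewrite (ord_inj hp) (ord_inj hq).
  - have : Pl q by rewrite /Pl (memiq hp) h1 /= orbT.
    move/lmin => h; exact: (rk3 hjn hij h1 (ltn_ord q) hl h2 h).
  - have : Pl p by rewrite /Pl (mempi hq) (ltn_trans h1 h2) !orbT.
    move/lmin => h; exact: (rk4 hjn hij h1 h2 h).
simpl in hpq, nki, nli. have g := @geom i j k l p q hij hik hkj hl hpq nki nli cr'. exact: final g.
Qed.

End Comb.

Section Avoid.
Variable n : nat.
Lemma avoid (D : {set diag n}) d : noncrossing D -> d \notin D ->
  exists T, [&& triangulation T, D \subset T & d \notin T].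
Proof.
move=> ncD dD.
case: (boolP [exists e in D, crossing d e]) => [/existsP[e /andP[eD cr]]|/existsPn nc].
  have [T /andP[hT sT]] := extend ncD.
  exists T; rewrite hT sT /=; case/andP: (hT) => ncT _.
  exact: nc_notin ncT (subsetP sT _ eD) cr.
have [d' /andP[cr /forallP nc']] : exists d', crossing d d' && [forall e in D, ~~ crossing d' e].
  by apply: core => // e eD; move: (nc e); rewrite eD.
have ncD' : noncrossing (d' |: D).
  by apply: noncrossing_add => // e eD; move: (nc' e); rewrite eD.
have [T /andP[hT sT]] := extend ncD'.
exists T; rewrite hT (subset_trans (subsetUr _ _) sT) /=; case/andP: (hT) => ncT _.
exact: nc_notin ncT (subsetP sT _ (setU11 _ _)) cr.
Qed.
End Avoid.

Local Open Scope ring_scope.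

Section Real.
Variable R : realFieldType.
Variable n : nat.
Hypothesis hn : (4 <= n)%N.

Definition cc : R := ((n - 3)%:R)^-1.

Lemma cc_gt0 : 0 < cc.
Proof. rewrite /cc invr_gt0 ltr0n; lia. Qed.

Lemma PhiT_ge0 (T : {set diag n}) d : 0 <= PhiT R T d.
Proof. by rewrite ffunE; case: ifP => // _; exact: ltW cc_gt0. Qed.

Lemma PhiT_le (T : {set diag n}) d : PhiT R T d <= cc.
Proof. by rewrite ffunE; case: ifP => // _; exact: ltW cc_gt0. Qed.

Lemma avg_eq (N : nat) : (0 < N)%N -> (N%:R)^-1 * (cc *+ N) = cc.
Proof. by move=> hN; rewrite -[cc *+ N]mulr_natr mulrCA mulVf ?mulr1 // pnatr_eq0 -lt0n. Qed.

Lemma PhiD_ge0 (D : {set diag n}) d : 0 <= PhiD R D d.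
Proof.
rewrite /PhiD ffunE mulr_ge0 ?invr_ge0 ?ler0n //.
by apply: sumr_ge0 => T _; exact: PhiT_ge0.
Qed.

Lemma PhiD_le (D : {set diag n}) d : PhiD R D d <= cc.
Proof.
rewrite /PhiD ffunE; case: (posnP #|triangs_above D|) => [->|hpos].
  by rewrite invr0 mul0r; exact: ltW cc_gt0.
rewrite -[X in _ <= X](avg_eq hpos) ler_wpM2l ?invr_ge0 ?ler0n //.
rewrite -sumr_const; apply: ler_sum => T _; exact: PhiT_le.
Qed.

Lemma PhiD_in (D : {set diag n}) d : noncrossing D -> d \in D -> PhiD R D d = cc.
Proof.
move=> ncD dD; have [T0 /andP[hT sT]] := extend ncD.
have hpos : (0 < #|triangs_above D|)%N by apply/card_gt0P; exists T0; rewrite inE hT sT.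
rewrite /PhiD ffunE -[RHS](avg_eq hpos) -sumr_const; congr (_ * _).
rewrite -sumr_const; apply: eq_bigr => T; rewrite inE => /andP[_ sT'].
by rewrite ffunE (subsetP sT' _ dD).
Qed.

Lemma PhiD_lt (D : {set diag n}) d : noncrossing D -> d \notin D -> PhiD R D d < cc.
Proof.
move=> ncD dD; have [T0 /and3P[hT sT dT]] := avoid ncD dD.
have T0in : T0 \in triangs_above D by rewrite inE hT sT.
have hpos : (0 < #|triangs_above D|)%N by apply/card_gt0P; exists T0.
rewrite /PhiD ffunE -[X in _ < X](avg_eq hpos) ltr_pM2l ?invr_gt0 ?ltr0n //.
rewrite -subr_gt0 -sumr_const -sumrB (bigD1 T0) //= ffunE (negbTE dT) subr0.
apply: (lt_le_trans cc_gt0); rewrite lerDl; apply: sumr_ge0 => T _.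
by rewrite subr_ge0; exact: PhiT_le.
Qed.


Definition pos (t : R) := 0 < t.

Fixpoint cmr (s : seq {set diag n}) (a : seq R) (d : diag n) : R :=
  match s, a with D :: s1, x :: a1 => x * PhiD R D d + cmr s1 a1 d | _, _ => 0 end.

Fixpoint gr (s : seq {set diag n}) (a : seq R) (d : diag n) : R :=
  match s, a with D :: s1, x :: a1 => x * (cc - PhiD R D d) + gr s1 a1 d | _, _ => 0 end.

Lemma gr_cons (D : {set diag n}) (s : seq {set diag n}) (x : R) (a : seq R) d : gr (D :: s) (x :: a) d = x * (cc - PhiD R D d) + gr s a d.
Proof. by []. Qed.

Lemma gr_cmr (s : seq {set diag n}) (a : seq R) d : size a = size s -> gr s a d = cc * \sum_(t <- a) t - cmr s a d.
Proof.
elim: s a => [|D s IH] [|x a] hs //=.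
  by rewrite big_nil mulr0 subr0.
case: hs => hs; rewrite IH // big_cons; ring.
Qed.

Lemma comb_cmr (s : seq {set diag n}) (a : seq R) d : size a = size s -> comb s a d = cmr s a d.
Proof.
elim: s a => [|D s IH] [|x a] hs //=.
  by rewrite /comb ffunE big_ord0.
case: hs => hs; rewrite /comb ffunE big_ord_recl /=; congr (_ + _).
rewrite -IH // /comb ffunE; by apply: eq_bigr => i _.
Qed.

Lemma tr_proper : transitive (fun A B : {set diag n} => A \proper B).
Proof. by move=> y x z; apply: proper_trans. Qed.

Lemma chain_cons (D : {set diag n}) (s : seq {set diag n}) : is_chain (D :: s) ->
  [/\ noncrossing D, is_chain s & forall E, E \in s -> D \proper E].
Proof.
rewrite /is_chain /= => /andP[/andP[ncD ncs] hp]; split => //.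
  by rewrite ncs (path_sorted hp).
by move=> E hE; exact: (allP (order_path_min tr_proper hp) E hE).
Qed.

Lemma chain_sub (s2 s : seq {set diag n}) : subseq s2 s -> is_chain s -> is_chain s2.
Proof.
rewrite /is_chain => sub /andP[hall hsort]; apply/andP; split.
  by apply/allP => E /(mem_subseq sub) hE; exact: (allP hall).
exact: (subseq_sorted tr_proper sub hsort).
Qed.

Lemma gr_ge0 (s : seq {set diag n}) (a : seq R) d : all pos a -> 0 <= gr s a d.
Proof.
elim: s a => [|D s IH] [|x a] //= /andP[hx ha].
by rewrite addr_ge0 ?IH // mulr_ge0 ?(ltW hx) // subr_ge0 PhiD_le.
Qed.

Lemma gr0 (s : seq {set diag n}) (a : seq R) d : all (@noncrossing n) s -> (forall E, E \in s -> d \in E) -> gr s a d = 0.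
Proof.
elim: s a => [|D s IH] [|x a] //= /andP[ncD ncs] hE.
rewrite PhiD_in ?hE ?mem_head // subrr mulr0 add0r IH // => E hEs.
by apply: hE; rewrite inE hEs orbT.
Qed.

Lemma sum_ge0 (a : seq R) : all pos a -> 0 <= \sum_(t <- a) t.
Proof.
elim: a => [|x a IH]; first by rewrite big_nil.
by rewrite /= big_cons => /andP[hx ha]; rewrite addr_ge0 ?IH // ltW.
Qed.

Lemma sum_gt0 (x : R) (a : seq R) : all pos (x :: a) -> 0 < \sum_(t <- x :: a) t.
Proof.
rewrite /= big_cons => /andP[hx ha]; apply: (lt_le_trans hx).
by rewrite lerDl sum_ge0.
Qed.

Lemma head_sub (D : {set diag n}) (s : seq {set diag n}) (x : R) (a : seq R) (E : {set diag n}) (s' : seq {set diag n}) (y : R) (a' : seq R) : is_chain (D :: s) -> is_chain (E :: s') ->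
  all pos (y :: a') ->
  (forall d, gr (D :: s) (x :: a) d = gr (E :: s') (y :: a') d) -> D \subset E.
Proof.
move=> hc hc' hp' hg.
have [ncD ncs hD] := chain_cons hc; have [ncE _ _] := chain_cons hc'.
apply/subsetP => d dD.
have h0 : gr (D :: s) (x :: a) d = 0.
  apply: gr0 => [|F]; first by rewrite /= ncD; case/andP: ncs.
  by rewrite inE => /orP[/eqP->//|/hD/proper_sub/subsetP]; apply.
case: (boolP (d \in E)) => // dE; exfalso.
move: h0; rewrite hg gr_cons; case/andP: hp' => hy hp'.
have hlt := PhiD_lt ncE dE.
have : 0 < y * (cc - PhiD R E d) + gr s' a' d.
  have hg0 : 0 < cc - PhiD R E d by rewrite subr_gt0.
  by apply: (lt_le_trans (mulr_gt0 hy hg0)); rewrite lerDl gr_ge0.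
by move=> /[swap] ->; rewrite ltxx.
Qed.

Lemma head_ge (D D1 : {set diag n}) (s : seq {set diag n}) (x : R) (a : seq R) (s' : seq {set diag n}) (y : R) (a' : seq R) : is_chain (D :: D1 :: s) -> is_chain (D :: s') ->
  size a = size (D1 :: s) -> all pos (x :: a) -> all pos (y :: a') ->
  (forall d, gr (D :: D1 :: s) (x :: a) d = gr (D :: s') (y :: a') d) -> y <= x.
Proof.
move=> hc hc' hs hp hp' hg.
have [ncD hc1 hD] := chain_cons hc; have [nc1 hcs hD1] := chain_cons hc1.
have [_ [d d1 dD]] := properP (hD D1 (mem_head _ _)).
case: a hs hp hg => [//|x1 a] _ hp hg.
have e0 : gr (D1 :: s) (x1 :: a) d = 0.
  apply: gr0 => [|F]; first by rewrite /= nc1; case/andP: hcs.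
  by rewrite inE => /orP[/eqP->//|/hD1/proper_sub/subsetP]; apply.
move: (hg d); rewrite gr_cons e0 addr0 gr_cons => heq.
case/andP: hp' => hy hp''.
have : y * (cc - PhiD R D d) <= x * (cc - PhiD R D d) by rewrite heq lerDl gr_ge0.
by rewrite ler_pM2r // subr_gt0 (PhiD_lt ncD dD).
Qed.

Lemma head_eq (D : {set diag n}) (s : seq {set diag n}) (x : R) (a : seq R) (s' : seq {set diag n}) (y : R) (a' : seq R) : is_chain (D :: s) -> is_chain (D :: s') ->
  size a = size s -> size a' = size s' -> all pos (x :: a) -> all pos (y :: a') ->
  \sum_(t <- x :: a) t = \sum_(t <- y :: a') t ->
  (forall d, gr (D :: s) (x :: a) d = gr (D :: s') (y :: a') d) -> x = y.
Proof.
case: s a => [|D1 s] [|x1 a] // hc; case: s' a' => [|E1 s'] [|y1 a'] // hc' hs hs' hp hp' hsum hg.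
- by move: hsum; rewrite !big_cons !big_nil !addr0.
- have hle := head_ge hc' hc hs' hp' hp (fun d => esym (hg d)).
  have : y < x.
    move: hsum; rewrite [in LHS]big_cons big_nil addr0 => ->.
    by rewrite big_cons ltrDl; apply: sum_gt0; case/andP: hp'.
  by rewrite ltNge hle.
- have hle := head_ge hc hc' hs hp hp' hg.
  have : x < y.
    move: hsum; rewrite [in RHS]big_cons big_nil addr0 => <-.
    by rewrite big_cons ltrDl; apply: sum_gt0; case/andP: hp.
  by rewrite ltNge hle.
- apply/le_anti; rewrite (head_ge hc' hc hs' hp' hp (fun d => esym (hg d))).
  by rewrite (head_ge hc hc' hs hp hp' hg).
Qed.

Lemma uniq_main (s : seq {set diag n}) : forall (a : seq R) (s' : seq {set diag n}) (a' : seq R), is_chain s -> is_chain s' -> size a = size s ->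
  size a' = size s' -> all pos a -> all pos a' ->
  \sum_(t <- a) t = \sum_(t <- a') t -> (forall d, gr s a d = gr s' a' d) ->
  s = s' /\ a = a'.
Proof.
elim: s => [|D s IH] a s' a' hc hc' hs hs' hp hp' hsum hg.
  case: a hs hsum hp hg => // _ hsum _ hg.
  case: s' a' hc' hs' hp' hsum hg => [|E s'] [|y a'] hc' hs' hp' hsum hg //.
  by have := sum_gt0 hp'; rewrite -hsum big_nil ltxx.
case: a hs hp hsum hg => [//|x a] [hs] hp hsum hg.
case: s' a' hc' hs' hp' hsum hg => [|E s'] [|y a'] hc' hs' hp' hsum hg //.
  by have := sum_gt0 hp; rewrite hsum big_nil ltxx.
case: hs' => hs'.
have hDE : D \subset E := head_sub hc hc' hp' hg.
have hED : E \subset D := head_sub hc' hc hp (fun d => esym (hg d)).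
have eDE : D = E by apply/eqP; rewrite eqEsubset hDE hED.
subst E.
have exy : x = y := head_eq hc hc' hs hs' hp hp' hsum hg.
subst y.
have [_ hcs _] := chain_cons hc; have [_ hcs' _] := chain_cons hc'.
have [-> ->] : s = s' /\ a = a'.
  apply: IH => //; [by case/andP: hp|by case/andP: hp'| |].
    by move: hsum; rewrite !big_cons; apply: addrI.
  by move=> d; move: (hg d); rewrite !gr_cons; apply: addrI.
by [].
Qed.

Lemma filt (s : seq {set diag n}) (a : seq R) : size a = size s -> all (fun t => 0 <= t) a ->
  exists s2 a2, [/\ subseq s2 s, size a2 = size s2, all pos a2,
    \sum_(t <- a2) t = \sum_(t <- a) t & forall d, cmr s2 a2 d = cmr s a d].
Proof.
elim: s a => [|D s IH] [|x a] hs hnn //.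
  by exists [::], [::]; split.
case: hs => hs; case/andP: hnn => hx hnn.
have [s2 [a2 [sub hs2 hp2 hsum2 hcm]]] := IH a hs hnn.
case: (eqVneq x 0) => [->|hx0].
  exists s2, a2; split => //.
  - exact: subseq_trans sub (subseq_cons _ _).
  - by rewrite big_cons add0r.
  - by move=> d; rewrite hcm /= mul0r add0r.
exists (D :: s2), (x :: a2); split => /=.
- by rewrite eqxx.
- by rewrite hs2.
- by rewrite hp2 andbT /pos lt_def hx0 hx.
- by rewrite !big_cons hsum2.
- by move=> d; rewrite hcm.
Qed.

End Real.

Theorem lemma15 (R : realFieldType) (n : nat) (hn : (4 <= n)%N)
  (x : {ffun diag n -> R}) (hx : in_image x) :
  exists (s : seq {set diag n}) (a : seq R),
    [/\ is_chain s, size a = size s, all (fun t => 0 < t) a,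
        \sum_(t <- a) t = 1 & x = comb s a] /\
    forall (s' : seq {set diag n}) (a' : seq R),
      [/\ is_chain s', size a' = size s', all (fun t => 0 < t) a',
          \sum_(t <- a') t = 1 & x = comb s' a'] ->
      s' = s /\ a' = a.
Proof.
case: hx => s [a [hc hs hnn hsum hxe]].
have [s2 [a2 [sub hs2 hp2 hsum2 hcm]]] := filt hs hnn.
have hc2 := chain_sub sub hc.
have hx2 : x = comb s2 a2.
  by apply/ffunP => d; rewrite hxe !comb_cmr // hcm.
exists s2, a2; split.
  by split => //; rewrite hsum2.
move=> s' a' [hc' hs' hp' hsum' hx'].
apply: (uniq_main hn) => //.
  by rewrite hsum' hsum2 hsum.
by move=> d; rewrite !gr_cmr // -!comb_cmr // -hx' -hx2 hsum' hsum2 hsum.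
Qed.
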